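(* Let $u\in[0,2\pi)$ and $v\in[0,\pi)$. Define $$K_1=\cos\tfrac v2\cos\tfrac u2\,\mathbb{1}+\sin\tfrac v2\sin\tfrac u2\,\sigma_3,\qquad K_2=\sin\tfrac v2\cos\tfrac u2\,\sigma_1+i\cos\tfrac v2\sin\tfrac u2\,\sigma_2,$$ where $\sigma_1,\sigma_2,\sigma_3$ are the Pauli matrices. Let $\Phi^*(\sigma)=K_1^\dagger\sigma K_1+K_2^\dagger\sigma K_2$ for Hermitian $2\times2$ matrices $\sigma$. Let $\sigma^A,\sigma^B$ be diagonal Hermitian $2\times 2$ matrices. If $$F=C^Q-\sigma^A\otimes\mathbb{1}_2-\mathbb{1}_2\otimes\sigma^B\ge0,$$ then also $$F^\Phi=C^Q-\Phi^*(\sigma^A)\otimes\mathbb{1}_2-\mathbb{1}_2\otimes\Phi^*(\sigma^B)\ge0.$$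
   Context: Here $C^Q=\tfrac12(\mathbb{1}-S)$ on $\mathbb{C}^2\otimes\mathbb{C}^2$, where $S(|x\rangle|y\rangle)=|y\rangle|x\rangle$ is the swap operator. The operators $K_1,K_2$ satisfy $K_1^\dagger K_1+K_2^\dagger K_2=\mathbb{1}$, so they are the Kraus operators of a single-qubit CPTP map $\Phi(\rho)=K_1\rho K_1^\dagger+K_2\rho K_2^\dagger$, and $\Phi^*$ is its dual map. ''$\ge0$'' means positive semidefinite. *)

(* Defs.v *)
From HB Require Import structures.
From mathcomp Require Import all_boot all_order all_algebra.
From mathcomp Require Import reals trigo.
From mathcomp Require Import complex mxtens.

Set Implicit Arguments.
Unset Strict Implicit.
Unset Printing Implicit Defensive.

Import Order.TTheory GRing.Theory Num.Theory.
Local Open Scope ring_scope.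

Section Defs.
Variable R : realType.
Local Notation C := R[i].

Definition dagger {m n} (A : 'M[C]_(m, n)) : 'M[C]_(n, m) := (map_mx Num.conj A)^T.

Definition herm {n} (A : 'M[C]_n) : Prop := dagger A = A.

Definition psd {n} (A : 'M[C]_n) : Prop :=
  herm A /\ forall x : 'cV[C]_n, 0 <= (dagger x *m A *m x) 0 0.

Definition id2 : 'M[C]_2 := 1%:M.

Definition sigma1 : 'M[C]_2 :=
  \matrix_(i < 2, j < 2) (if (i != j :> nat) then 1 else 0).
Definition sigma2 : 'M[C]_2 :=
  \matrix_(i < 2, j < 2)
    (if ((i : nat) == 0%N) && ((j : nat) == 1%N) then - 'i
     else if ((i : nat) == 1%N) && ((j : nat) == 0%N) then 'i else 0).
Definition sigma3 : 'M[C]_2 :=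
  \matrix_(i < 2, j < 2)
    (if (i == j :> nat) then (if (i : nat) == 0%N then 1 else -1) else 0).

Definition swap2 : 'M[C]_(2 * 2) :=
  \matrix_(i, j) (if ((mxtens_unindex i).1 == (mxtens_unindex j).2) &&
                     ((mxtens_unindex i).2 == (mxtens_unindex j).1) then 1 else 0).

Definition CQ : 'M[C]_(2 * 2) := 2^-1 *: (1%:M - swap2).

Definition K1 (u v : R) : 'M[C]_2 :=
  (cos (v / 2) * cos (u / 2))%:C%C *: id2 + (sin (v / 2) * sin (u / 2))%:C%C *: sigma3.
Definition K2 (u v : R) : 'M[C]_2 :=
  (sin (v / 2) * cos (u / 2))%:C%C *: sigma1
  + ('i * (cos (v / 2) * sin (u / 2))%:C%C) *: sigma2.

Definition PhiStar (u v : R) (s : 'M[C]_2) : 'M[C]_2 :=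
  dagger (K1 u v) *m s *m K1 u v + dagger (K2 u v) *m s *m K2 u v.

End Defs.

(* Main.v *)
Require Import Defs.
From HB Require Import structures.
From mathcomp Require Import all_boot all_order all_algebra.
From mathcomp Require Import reals trigo.
From mathcomp Require Import complex mxtens.
From mathcomp Require Import ring lra.
Import Order.TTheory GRing.Theory Num.Theory.
Local Open Scope ring_scope.
Set Warnings "-notation-overridden,-ambiguous-paths".
Set Implicit Arguments. Unset Strict Implicit.
Section S.
Variable R : realType.
Local Notation C := R[i].
Local Notation idx := (@mxtens_index 2 2).

Lemma sum2 (F : 'I_2 -> C) : \sum_(i<2) F i = F ord0 + F ord_max.
Proof. by rewrite !big_ord_recl big_ord0 addr0; congr (_ + F _); apply: val_inj. Qed.

Lemma sum4 (F : 'I_(2*2) -> C) :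
  \sum_(k < 2*2) F k = \sum_(i<2) \sum_(j<2) F (idx (i,j)).
Proof.
rewrite pair_big /=.
rewrite (reindex idx) /=; last first.
  by apply: onW_bij; exists (@mxtens_unindex 2 2); [apply: mxtens_indexK|apply: mxtens_unindexK].
by apply: eq_bigr => -[i j].
Qed.

Lemma formE (M : 'M[C]_(2*2)) (x : 'cV[C]_(2*2)) :
  (dagger x *m M *m x) 0 0 =
  \sum_(a < 2*2) \sum_(b < 2*2) Num.conj (x a 0) * M a b * x b 0.
Proof.
rewrite mxE exchange_big /=; apply: eq_bigr => b _.
rewrite mxE big_distrl /=; apply: eq_bigr => a _.
by rewrite !mxE.
Qed.

Lemma Fentry (S T : 'M[C]_2) i j k l :
  (CQ R - S *t id2 R - id2 R *t T) (idx (i,j)) (idx (k,l)) =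
  2^-1 * (((i == k) && (j == l))%:R - ((i == l) && (j == k))%:R)
  - S i k * (j == l)%:R - (i == k)%:R * T j l.
Proof.
rewrite !mxE !mxtens_indexK /= (inj_eq (can_inj (@mxtens_indexK 2 2))) xpair_eqE.
by case: ((i == l) && (j == k)).
Qed.


Definition mk2 (a b c d : C) : 'M[C]_2 :=
  \matrix_(i, j) if (i : nat) == 0%N then (if (j : nat) == 0%N then a else b)
                 else (if (j : nat) == 0%N then c else d).

Lemma ord2P (i : 'I_2) : i = ord0 \/ i = ord_max.
Proof. case: i => [[|[|m]] H]; [left|right|by []]; exact: val_inj. Qed.

Lemma mk2P (M : 'M[C]_2) :
  M = mk2 (M ord0 ord0) (M ord0 ord_max) (M ord_max ord0) (M ord_max ord_max).
Proof.
apply/matrixP => i j; rewrite mxE.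
by case: (ord2P i) => ->; case: (ord2P j) => ->.
Qed.

Lemma mk2_mul a b c d e f g h :
  mk2 a b c d *m mk2 e f g h = mk2 (a*e + b*g) (a*f + b*h) (c*e + d*g) (c*f+d*h).
Proof.
apply/matrixP => i j; rewrite !mxE sum2 !mxE.
by case: (ord2P i) => ->; case: (ord2P j) => ->.
Qed.

Lemma mk2_add a b c d e f g h :
  mk2 a b c d + mk2 e f g h = mk2 (a+e) (b+f) (c+g) (d+h).
Proof.
apply/matrixP => i j; rewrite !mxE.
by case: (ord2P i) => ->; case: (ord2P j) => ->.
Qed.

Lemma mk2_dagger a b c d :
  dagger (mk2 a b c d) = mk2 (Num.conj a) (Num.conj c) (Num.conj b) (Num.conj d).
Proof.
apply/matrixP => i j; rewrite !mxE.
by case: (ord2P i) => ->; case: (ord2P j) => ->.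
Qed.


Lemma K1gen (c1 c2 : C) : c1 *: id2 R + c2 *: sigma3 R = mk2 (c1+c2) 0 0 (c1-c2).
Proof.
apply/matrixP => i j; rewrite !mxE.
case: (ord2P i) => ->; case: (ord2P j) => -> /=. all: rewrite ?mulr1 ?mulr0 ?addr0 ?add0r ?mulrN. all: by rewrite ?mulr1.
Qed.

Lemma K2gen (c3 c4 : C) : c3 *: sigma1 R + ('i * c4) *: sigma2 R = mk2 0 (c3+c4) (c3-c4) 0.
Proof.
apply/matrixP => i j; rewrite !mxE.
case: (ord2P i) => ->; case: (ord2P j) => -> /=; rewrite ?mulr1 ?mulr0 ?addr0 ?add0r //.
  by rewrite mulrN mulrAC mulCii mulN1r opprK.
by rewrite mulrAC mulCii mulN1r.
Qed.

Lemma conjR (x : R) : Num.conj (x%:C%C : C) = x%:C%C.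
Proof. exact: conjc_real. Qed.

Lemma conjD' (a b : C) : Num.conj (a + b) = Num.conj a + Num.conj b.
Proof. exact: rmorphD. Qed.
Lemma conjN' (a : C) : Num.conj (- a) = - Num.conj a.
Proof. exact: rmorphN. Qed.
Lemma conjM' (a b : C) : Num.conj (a * b) = Num.conj a * Num.conj b.
Proof. exact: rmorphM. Qed.
Lemma conj0' : Num.conj (0 : C) = 0.
Proof. exact: rmorph0. Qed.

Lemma PhiE u v (s0 s1 : C) :
  let c1 := (cos (v/2) * cos (u/2))%:C%C in
  let c2 := (sin (v/2) * sin (u/2))%:C%C in
  let c3 := (sin (v/2) * cos (u/2))%:C%C in
  let c4 := (cos (v/2) * sin (u/2))%:C%C in
  PhiStar u v (mk2 s0 0 0 s1) =
  mk2 ((c1+c2)^+2 * s0 + (c3-c4)^+2 * s1) 0 0 ((c1-c2)^+2 * s1 + (c3+c4)^+2 * s0).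
Proof.
move=> c1 c2 c3 c4.
rewrite /PhiStar /K1 /K2 -/c1 -/c2 -/c3 -/c4 K1gen K2gen !mk2_dagger.
rewrite /c1 /c2 /c3 /c4 !conjD' !conjN' !conjR ?conj0' -/c1 -/c2 -/c3 -/c4.
rewrite !mk2_mul !mk2_add; congr mk2; ring.
Qed.


Definition Fm (S T : 'M[C]_2) := CQ R - S *t id2 R - id2 R *t T.

Definition Ef (a0 a1 b0 b1 z0 z1 z2 z3 : C) :=
  - (a0 + b0) * (Num.conj z0 * z0) + (2^-1 - a0 - b1) * (Num.conj z1 * z1)
  + (2^-1 - a1 - b0) * (Num.conj z2 * z2)
  - 2^-1 * (Num.conj z1 * z2 + Num.conj z2 * z1) - (a1 + b1) * (Num.conj z3 * z3).

Lemma formF a0 a1 b0 b1 (x : 'cV[C]_(2*2)) :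
  (dagger x *m Fm (mk2 a0 0 0 a1) (mk2 b0 0 0 b1) *m x) 0 0 =
  Ef a0 a1 b0 b1 (x (idx (ord0, ord0)) 0) (x (idx (ord0, ord_max)) 0)
     (x (idx (ord_max, ord0)) 0) (x (idx (ord_max, ord_max)) 0).
Proof.
rewrite formE sum4 !sum2 !sum4 !sum2 /Fm !Fentry !mxE /= /Ef.
ring.
Qed.


Definition QD (d z0 z1 z2 z3 : C) :=
  d * (Num.conj z0 * z0 + Num.conj z1 * z1 + Num.conj z2 * z2 + Num.conj z3 * z3)
  + 2^-1 * ((Num.conj z1 - Num.conj z2) * (z1 - z2)).

Lemma keyid (A B a0 a1 b0 b1 z0 z1 z2 z3 : C) :
  Ef (A * a0 + (1 - A) * a1) (B * a1 + (1 - B) * a0)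
     (A * b0 + (1 - A) * b1) (B * b1 + (1 - B) * b0) z0 z1 z2 z3 =
  A * B * Ef a0 a1 b0 b1 z0 z1 z2 z3
  + (1 - A) * (1 - B) * Ef a0 a1 b0 b1 z3 z2 z1 z0
  + A * (1 - B) * QD (- (a0 + b0)) z0 z1 z2 z3
  + (1 - A) * B * QD (- (a1 + b1)) z0 z1 z2 z3.
Proof. rewrite /Ef /QD. ring. Qed.

Lemma conjB' (a b : C) : Num.conj (a - b) = Num.conj a - Num.conj b.
Proof. exact: rmorphB. Qed.

Lemma QD_ge0 d z0 z1 z2 z3 : 0 <= d -> 0 <= QD d z0 z1 z2 z3.
Proof.
move=> hd; rewrite /QD -conjB'.
have h z : 0 <= Num.conj z * z :> C by rewrite mulrC mul_conjC_ge0.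
apply: addr_ge0; apply: mulr_ge0; rewrite ?h //.
  by rewrite !addr_ge0 ?h.
by rewrite invr_ge0 ler0n.
Qed.

Lemma daggerE m n (M : 'M[C]_(m, n)) i j : dagger M i j = Num.conj (M j i).
Proof. by rewrite !mxE. Qed.

Lemma mk2dconj a0 a1 : Num.conj a0 = a0 -> Num.conj a1 = a1 ->
  forall i k, Num.conj (mk2 a0 0 0 a1 k i) = mk2 a0 0 0 a1 i k.
Proof.
move=> h0 h1 i k; rewrite !mxE.
by case: (ord2P i) => ->; case: (ord2P k) => -> /=; rewrite ?h0 ?h1 ?conj0'.
Qed.

Lemma conjV2 : Num.conj (2^-1 : C) = 2^-1.
Proof. rewrite fmorphV; congr (_^-1); exact: rmorph_nat. Qed.

Lemma conjn (n : nat) : Num.conj (n%:R : C) = n%:R.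
Proof. exact: conjC_nat. Qed.

Lemma hermF a0 a1 b0 b1 : Num.conj a0 = a0 -> Num.conj a1 = a1 ->
  Num.conj b0 = b0 -> Num.conj b1 = b1 ->
  herm (Fm (mk2 a0 0 0 a1) (mk2 b0 0 0 b1)).
Proof.
move=> ha0 ha1 hb0 hb1; apply/matrixP => p q; rewrite daggerE.
case: (mxtens_indexP p) => i j; case: (mxtens_indexP q) => k l.
rewrite /Fm !Fentry !conjB' !conjM' conjB' !conjn conjV2 !mk2dconj //.
by rewrite [k == i]eq_sym [l == j]eq_sym [k == j]eq_sym [l == i]eq_sym andbC [(j == k) && _]andbC.
Qed.


Lemma revE1 : rev_ord (idx (ord0, ord0)) = idx (ord_max, ord_max). Proof. exact: val_inj. Qed.
Lemma revE2 : rev_ord (idx (ord0, ord_max)) = idx (ord_max, ord0). Proof. exact: val_inj. Qed.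
Lemma revE3 : rev_ord (idx (ord_max, ord0)) = idx (ord0, ord_max). Proof. exact: val_inj. Qed.
Lemma revE4 : rev_ord (idx (ord_max, ord_max)) = idx (ord0, ord0). Proof. exact: val_inj. Qed.

Lemma key (al al' be be' : R) a0 a1 b0 b1 :
  al + al' = 1 -> be + be' = 1 -> 0 <= al -> 0 <= al' -> 0 <= be -> 0 <= be' ->
  Num.conj a0 = a0 -> Num.conj a1 = a1 -> Num.conj b0 = b0 -> Num.conj b1 = b1 ->
  psd (Fm (mk2 a0 0 0 a1) (mk2 b0 0 0 b1)) ->
  psd (Fm (mk2 (al%:C%C * a0 + al'%:C%C * a1) 0 0 (be%:C%C * a1 + be'%:C%C * a0))
          (mk2 (al%:C%C * b0 + al'%:C%C * b1) 0 0 (be%:C%C * b1 + be'%:C%C * b0))).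
Proof.
move=> hal hbe hal0 hal1 hbe0 hbe1 ha0 ha1 hb0 hb1 [_ hF]; split.
  by apply: hermF; rewrite !conjD' !conjM' !conjR ?ha0 ?ha1 ?hb0 ?hb1.
have hE (x : 'cV[C]_(2*2)) : 0 <= Ef a0 a1 b0 b1 (x (idx (ord0, ord0)) 0) (x (idx (ord0, ord_max)) 0)
     (x (idx (ord_max, ord0)) 0) (x (idx (ord_max, ord_max)) 0).
  by rewrite -formF; apply: hF.
have D0 : 0 <= - (a0 + b0).
  have := hE (\col_k ((k == idx (ord0, ord0))%:R)).
  rewrite !mxE /=.
  rewrite /Ef ?conj0' ?conjn; congr (_ <= _); ring.
have D1 : 0 <= - (a1 + b1).
  have := hE (\col_k ((k == idx (ord_max, ord_max))%:R)).
  rewrite !mxE /=.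
  rewrite /Ef ?conj0' ?conjn; congr (_ <= _); ring.
move=> x; rewrite formF.
have ea : al'%:C%C = 1 - al%:C%C :> C.
  have -> : al' = 1 - al by lra.
  by rewrite rmorphB rmorph1.
have eb : be'%:C%C = 1 - be%:C%C :> C.
  have -> : be' = 1 - be by lra.
  by rewrite rmorphB rmorph1.
rewrite ea eb keyid -ea -eb.
have hS := hE (\col_k x (rev_ord k) 0).
rewrite !mxE revE1 revE2 revE3 revE4 in hS.
have p (r : R) : 0 <= r -> 0 <= r%:C%C :> C by rewrite ler0c.
by rewrite !addr_ge0 // !mulr_ge0 ?p ?hE ?QD_ge0.
Qed.

End S.

Theorem lemma5p1 (R : realType) (u v : R)
  (hu0 : 0 <= u) (hu1 : u < 2 * pi) (hv0 : 0 <= v) (hv1 : v < pi)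
  (sA sB : 'M[R[i]]_2)
  (hAd : is_diag_mx sA) (hAh : herm sA)
  (hBd : is_diag_mx sB) (hBh : herm sB) :
  psd (CQ R - sA *t id2 R - id2 R *t sB) ->
  psd (CQ R - PhiStar u v sA *t id2 R - id2 R *t PhiStar u v sB).
Proof.
have hd (S : 'M[R[i]]_2) : is_diag_mx S -> herm S ->
    [/\ S = mk2 (S ord0 ord0) 0 0 (S ord_max ord_max),
        Num.conj (S ord0 ord0) = S ord0 ord0 &
        Num.conj (S ord_max ord_max) = S ord_max ord_max].
  move=> /is_diag_mxP hS; rewrite /herm => hH; split.
  - by rewrite {1}(mk2P S) (hS ord0 ord_max) // (hS ord_max ord0).
  - by have := congr1 (fun M : 'M[R[i]]_2 => M ord0 ord0) hH; rewrite /= daggerE.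
  - by have := congr1 (fun M : 'M[R[i]]_2 => M ord_max ord_max) hH; rewrite /= daggerE.
have [eA ha0 ha1] := hd _ hAd hAh.
have [eB hb0 hb1] := hd _ hBd hBh.
move: (sA ord0 ord0) (sA ord_max ord_max) (sB ord0 ord0) (sB ord_max ord_max) eA eB ha0 ha1 hb0 hb1
  => a0 a1 b0 b1 -> -> ha0 ha1 hb0 hb1 hF.
rewrite !PhiE /=.
set cv := cos (v / 2); set cu := cos (u / 2); set sv := sin (v / 2); set su := sin (u / 2).
have E1 : ((cv * cu)%:C%C + (sv * su)%:C%C)^+2 = ((cv * cu + sv * su)^+2)%:C%C :> R[i]
  by rewrite rmorphXn rmorphD.
have E2 : ((cv * cu)%:C%C - (sv * su)%:C%C)^+2 = ((cv * cu - sv * su)^+2)%:C%C :> R[i]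
  by rewrite rmorphXn rmorphB.
have E3 : ((sv * cu)%:C%C + (cv * su)%:C%C)^+2 = ((sv * cu + cv * su)^+2)%:C%C :> R[i]
  by rewrite rmorphXn rmorphD.
have E4 : ((sv * cu)%:C%C - (cv * su)%:C%C)^+2 = ((sv * cu - cv * su)^+2)%:C%C :> R[i]
  by rewrite rmorphXn rmorphB.
rewrite E1 E2 E3 E4.
have h1 : cv ^+ 2 + sv ^+ 2 = 1 by exact: cos2Dsin2.
have h2 : cu ^+ 2 + su ^+ 2 = 1 by exact: cos2Dsin2.
apply: key; rewrite ?sqr_ge0 //.
  transitivity ((cv ^+ 2 + sv ^+ 2) * (cu ^+ 2 + su ^+ 2)); first ring.
  by rewrite h1 h2 mulr1.
transitivity ((cv ^+ 2 + sv ^+ 2) * (cu ^+ 2 + su ^+ 2)); first ring.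
by rewrite h1 h2 mulr1.
Qed.
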